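(* Let $X_1,X_2,B_1,B_2$ be topological spaces with continuous maps $f\colon X_1\to X_2$, $r_1\colon X_1\to B_1$, $r_2\colon X_2\to B_2$, $f_0\colon B_1\to B_2$ such that $r_2\circ f=f_0\circ r_1$, where $B_1,B_2$ are locally compact Hausdorff and $f_0$ is proper. Let $\tilde f\colon\beta_{B_1}X_1\to\beta_{B_2}X_2$ be the unique continuous map with $\tilde f\circ i_1=i_2\circ f$ and $\beta_{B_2}r_2\circ\tilde f=f_0\circ\beta_{B_1}r_1$. If $f$ is a homeomorphism, then so is $\tilde f$.
   Context: For a locally compact Hausdorff space $B$ and a space $X$ with continuous $r\colon X\to B$, let $H_X\subseteq\mathrm{C_b}(X)$ be the closed linear span of products $u\cdot(v\circ r)$, $u\in\mathrm{C_b}(X)$, $v\in\mathrm C_0(B)$. The relative Stone--Čech compactification $\beta_BX$ is the spectrum of the commutative C*-algebra $H_X$; $i\colon X\to\beta_BX$ sends $x$ to evaluation at $x$; $\beta_Br\colon\beta_BX\to B$ is the unique continuous map with $\beta_Br\circ i=r$. The map $\tilde f$ exists and is unique; $i_j$ denotes the canonical map for $(X_j,r_j)$. *)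

(* Defs.v *)
From HB Require Import structures.
From mathcomp Require Import all_boot all_order all_algebra.
From mathcomp Require Import all_classical all_reals all_analysis.
From mathcomp Require Import complex.
Set Implicit Arguments. Unset Strict Implicit. Unset Printing Implicit Defensive.
Import Order.TTheory GRing.Theory Num.Theory.
Local Open Scope classical_set_scope.
Local Open Scope ring_scope.
Import numFieldTopology.Exports.

Definition Cplx (R : realType) : numClosedFieldType := R[i].

Definition Cb (R : realType) (X : topologicalType) : set (X -> Cplx R) :=
  [set u : X -> Cplx R | continuous u /\ exists M : Cplx R, forall x, `|u x| <= M].

Definition C0 (R : realType) (B : topologicalType) : set (B -> Cplx R) :=
  [set v : B -> Cplx R | continuous v /\
     forall e : Cplx R, 0 < e -> exists K : set B, compact K /\
       forall b, ~ K b -> `|v b| < e].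

(* Finite linear combinations of products u * (v o r); scalars are absorbed into u. *)
Definition Hgen (R : realType) (X B : topologicalType) (r : X -> B) : set (X -> Cplx R) :=
  [set g : X -> Cplx R | exists (n : nat) (u : 'I_n -> X -> Cplx R) (v : 'I_n -> B -> Cplx R),
     (forall k, @Cb R X (u k) /\ @C0 R B (v k)) /\
     g = (fun x => \sum_(k < n) u k x * v k (r x))].

Definition HX (R : realType) (X B : topologicalType) (r : X -> B) : set (X -> Cplx R) :=
  [set h : X -> Cplx R | @Cb R X h /\
     forall e : Cplx R, 0 < e -> exists g, @Hgen R _ _ r g /\ forall x, `|h x - g x| <= e].

(* Characters of the commutative C*-algebra H_X: nonzero multiplicative linear
   functionals on H_X; normalized to be 0 outside H_X so that they are
   determined by their restriction to H_X. *)
Definition is_character (R : realType) (X B : topologicalType) (r : X -> B)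
    (phi : (X -> Cplx R) -> Cplx R) : Prop :=
  [/\ forall (a : Cplx R) f g, @HX R _ _ r f -> @HX R _ _ r g ->
        phi (fun x => a * f x + g x) = a * phi f + phi g,
      forall f g, @HX R _ _ r f -> @HX R _ _ r g -> phi (fun x => f x * g x) = phi f * phi g,
      exists f, @HX R _ _ r f /\ phi f != 0
    & forall f, ~ @HX R _ _ r f -> phi f = 0].

Definition spec_set (R : realType) (X B : topologicalType) (r : X -> B)
  : set {ptws (X -> Cplx R) -> Cplx R} := [set phi | @is_character R X B r phi].

(* The relative Stone-Cech compactification beta_B X = spectrum of H_X with the
   weak-* topology (pointwise convergence on H_X), realized as a subspace of the
   pointwise-convergence topology on functionals. *)
Definition betaB (R : realType) (X B : topologicalType) (r : X -> B) : topologicalType :=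
  set_type (@spec_set R X B r).

Definition evalH (R : realType) (X B : topologicalType) (r : X -> B) (x : X)
  : (X -> Cplx R) -> Cplx R :=
  fun h => if pselect (@HX R _ _ r h) is left _ then h x else 0.

Definition proper_map (S T : topologicalType) (g : S -> T) : Prop :=
  forall K : set T, compact K -> compact (g @^-1` K).

Definition homeomorphism (S T : topologicalType) (g : S -> T) : Prop :=
  continuous g /\ exists h : T -> S, [/\ cancel g h, cancel h g & continuous h].

Arguments evalH R {X B} r x _.
Arguments betaB R {X B} r.

(* Main.v *)
Require Import Defs.
From HB Require Import structures.
From mathcomp Require Import all_boot all_order all_algebra.
From mathcomp Require Import all_classical all_reals all_analysis.
From mathcomp Require Import complex.
Set Implicit Arguments. Unset Strict Implicit. Unset Printing Implicit Defensive.
Import Order.TTheory GRing.Theory Num.Theory.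
Local Open Scope classical_set_scope.
Local Open Scope ring_scope.
Import numFieldTopology.Exports.
Import numFieldNormedType.Exports.
From mathcomp Require Import ring lra.

Section Part1.
Variable R : realType.
Local Notation C := (Cplx R).

Lemma conj_continuous : continuous (fun z : C => z^*).
Proof.
move=> z; apply: (proj2 (@cvgrPdist_lt _ _ _ (nbhs z) _ _ _)) => e e0.
have := proj1 (@cvgrPdist_lt _ _ _ (nbhs z) _ _ _) (@cvg_id _ (nbhs z)) e e0.
move=> /(_ (nbhs_filter z)) H.
by apply: filterS H => y; rewrite -rmorphB norm_conjC.
Qed.

Lemma arith1 (e M : C) : 0 < e -> 0 <= M -> e / (M + 1) * M <= e.
Proof.
move=> e0 M0; have M1 : 0 < M + 1 by rewrite ltr_wpDl.
rewrite mulrAC ler_pdivrMr // ler_wpM2l ?lerDl ?ler01 //; exact: ltW.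
Qed.

Lemma arith1p (e M : C) : 0 < e -> 0 <= M -> 0 < e / (M + 1).
Proof.
move=> e0 M0; have M1 : 0 < M + 1 by rewrite ltr_wpDl.
by rewrite divr_gt0.
Qed.

Variable X : topologicalType.

Lemma Cb_cst (a : C) : Cb (fun _ : X => a).
Proof. by split; [exact: cst_continuous | exists `|a|]. Qed.

Lemma Cb_bound_ge0 (u : X -> C) (M : C) (x : X) : (forall y, `|u y| <= M) -> 0 <= M.
Proof. by move=> h; apply: le_trans (h x). Qed.

Lemma Cb_add (u w : X -> C) : Cb u -> Cb w -> Cb (fun x => u x + w x).
Proof.
move=> [cu [M1 hM1]] [cw [M2 hM2]]; split.
  by move=> x; apply: continuousD; [exact: cu | exact: cw].
exists (M1 + M2) => x; apply: le_trans (ler_normD _ _) _; exact: lerD.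
Qed.

Lemma Cb_mul (u w : X -> C) : Cb u -> Cb w -> Cb (fun x => u x * w x).
Proof.
move=> [cu [M1 hM1]] [cw [M2 hM2]]; split.
  by move=> x; apply: continuousM; [exact: cu | exact: cw].
exists (M1 * M2) => x; rewrite normrM; apply: ler_pM => //.
Qed.

Lemma Cb_conj (u : X -> C) : Cb u -> Cb (fun x => (u x)^*).
Proof.
move=> [cu [M hM]]; split.
  by move=> x; apply: continuous_comp; [exact: cu | exact: conj_continuous].
by exists M => x; rewrite norm_conjC.
Qed.

Lemma Cb_comp (Y : topologicalType) (u : X -> C) (g : Y -> X) :
  Cb u -> continuous g -> Cb (fun y => u (g y)).
Proof.
move=> [cu [M hM]] cg; split; last by exists M.
by move=> y; apply: continuous_comp; [exact: cg | exact: cu].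
Qed.

Lemma Cb_inv (h : X -> C) (mu d : C) : Cb h -> 0 < d ->
  (forall x, d <= `|mu - h x|) -> Cb (fun x => (mu - h x)^-1).
Proof.
move=> [ch _] d0 hd; split.
  move=> x; apply: (@continuousV C X (fun x => mu - h x) x).
    by rewrite -normr_gt0; apply: lt_le_trans (hd x).
  by apply: continuousB; [exact: cst_continuous | exact: ch].
exists d^-1 => x; rewrite normfV lef_pV2 ?posrE //.
exact: lt_le_trans (hd x).
Qed.

End Part1.
Section Part2.
Variable R : realType.
Local Notation C := (Cplx R).
Variables (X B : topologicalType) (r : X -> B).

Lemma Hgen0 : Hgen r (fun _ => 0 : C).
Proof.
exists 0%N, (fun _ _ => 0), (fun _ _ => 0); split; first by case.
by apply: funext => x; rewrite big_ord0.
Qed.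

Lemma Hgen_add (g1 g2 : X -> C) : Hgen r g1 -> Hgen r g2 ->
  Hgen r (fun x => g1 x + g2 x).
Proof.
move=> [n1 [u1 [v1 [h1 ->]]]] [n2 [u2 [v2 [h2 ->]]]].
exists (n1 + n2)%N.
exists (fun k => match fintype.split k with inl i => u1 i | inr j => u2 j end).
exists (fun k => match fintype.split k with inl i => v1 i | inr j => v2 j end).
split; first by move=> k; case: (fintype.split k).
apply: funext => x; rewrite big_split_ord /=.
congr (_ + _); apply: eq_bigr => i _.
  by have -> : fintype.split (lshift n2 i) = inl i := unsplitK (inl i).
by have -> : fintype.split (rshift n1 i) = inr i := unsplitK (inr i).
Qed.

Lemma Hgen_mulCb (g w : X -> C) : Hgen r g -> Cb w -> Hgen r (fun x => g x * w x).
Proof.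
move=> [n [u [v [h ->]]]] cw.
exists n, (fun k x => u k x * w x), v; split.
  by move=> k; have [? ?] := h k; split => //; exact: Cb_mul.
apply: funext => x; rewrite mulr_suml; apply: eq_bigr => i _.
by rewrite mulrAC.
Qed.

Lemma Hgen_conj (g : X -> C) : Hgen r g -> Hgen r (fun x => (g x)^*).
Proof.
move=> [n [u [v [h ->]]]].
exists n, (fun k x => (u k x)^*), (fun k b => (v k b)^*); split.
  move=> k; have [cu [cv cv0]] := h k; split; first exact: Cb_conj.
  split.
    by move=> b; apply: continuous_comp; [exact: cv | exact: conj_continuous].
  by move=> e /cv0 [K [cK hK]]; exists K; split => // b /hK; rewrite norm_conjC.
apply: funext => x; rewrite rmorph_sum; apply: eq_bigr => i _.
by rewrite rmorphM.
Qed.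

Lemma HX_Cb (h : X -> C) : HX r h -> Cb h.
Proof. by case. Qed.

Lemma HX0 : HX r (fun _ => 0 : C).
Proof.
split; first exact: Cb_cst.
by move=> e e0; exists (fun _ => 0); split; [exact: Hgen0 | move=> x; rewrite subrr normr0 ltW].
Qed.

Lemma HX_add (f g : X -> C) : HX r f -> HX r g -> HX r (fun x => f x + g x).
Proof.
move=> [cf af] [cg ag]; split; first exact: Cb_add.
move=> e e0; have e20 : 0 < e / 2 by rewrite divr_gt0.
have [f' [hf' ef']] := af _ e20; have [g' [hg' eg']] := ag _ e20.
exists (fun x => f' x + g' x); split; first exact: Hgen_add.
move=> x; rewrite opprD addrACA.
apply: le_trans (ler_normD _ _) _; rewrite [e]splitr; exact: lerD.
Qed.

Lemma HX_mulCb (h w : X -> C) : HX r h -> Cb w -> HX r (fun x => h x * w x).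
Proof.
move=> [ch ah] cw; split; first exact: Cb_mul.
case: (cw) => _ [M hM] e e0.
have [g [hg eg]] := ah _ (arith1p e0 (normr_ge0 M)).
exists (fun x => g x * w x); split; first exact: Hgen_mulCb.
move=> x; have M0 : 0 <= M by apply: le_trans (hM x).
rewrite -mulrBl normrM; apply: le_trans (arith1 e0 (normr_ge0 M)).
by apply: ler_pM => //; rewrite (ger0_norm M0).
Qed.

Lemma HX_mul (f g : X -> C) : HX r f -> HX r g -> HX r (fun x => f x * g x).
Proof. by move=> hf hg; apply: HX_mulCb => //; exact: HX_Cb. Qed.

Lemma HX_scale (a : C) (f : X -> C) : HX r f -> HX r (fun x => a * f x).
Proof.
move=> hf; have := HX_mulCb hf (Cb_cst X a).
by congr (HX r _); apply: funext => x; rewrite mulrC.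
Qed.

Lemma HX_lin (a : C) (f g : X -> C) : HX r f -> HX r g -> HX r (fun x => a * f x + g x).
Proof. by move=> hf hg; apply: (HX_add (HX_scale a hf) hg). Qed.

Lemma HX_conj (h : X -> C) : HX r h -> HX r (fun x => (h x)^*).
Proof.
move=> [ch ah]; split; first exact: Cb_conj.
move=> e e0; have [g [hg eg]] := ah _ e0.
exists (fun x => (g x)^*); split; first exact: Hgen_conj.
by move=> x; rewrite -rmorphB norm_conjC.
Qed.

End Part2.
Section Part3.
Variable R : realType.
Local Notation C := (Cplx R).
Variables (X B : topologicalType) (r : X -> B).
Variable psi : (X -> C) -> C.
Hypothesis hpsi : is_character r psi.

Lemma foldr_nb (T : Type) (phi : T -> C) (s : seq T) :
  (0 <= foldr (fun h acc => `|phi h| + acc) 0 s) /\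
  (forall h, List.In h s -> `|phi h| <= foldr (fun h acc => `|phi h| + acc) 0 s).
Proof.
elim: s => [|h s [IH0 IH]] /=; first by split.
split; first by apply: addr_ge0.
move=> h' [<-|hin]; first by rewrite lerDl.
by apply: le_trans (IH _ hin) _; rewrite lerDr.
Qed.

Let lin := let: And4 a _ _ _ := hpsi in a.
Let mul := let: And4 _ a _ _ := hpsi in a.

Lemma psi0 : psi (fun _ => 0) = 0.
Proof.
have := lin 1 (@HX0 R _ _ r) (@HX0 R _ _ r).
have -> : (fun _ : X => 1 * (0 : C) + 0) = (fun _ => 0).
  by apply: funext => x; rewrite mul1r addr0.
by rewrite mul1r => /eqP; rewrite -subr_eq0 opprD addrA subrr add0r oppr_eq0 => /eqP.
Qed.

Lemma psiD (f g : X -> C) : HX r f -> HX r g -> psi (fun x => f x + g x) = psi f + psi g.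
Proof.
move=> hf hg; have := lin 1 hf hg; rewrite mul1r => <-.
by congr psi; apply: funext => x; rewrite mul1r.
Qed.

Lemma psiZ (a : C) (f : X -> C) : HX r f -> psi (fun x => a * f x) = a * psi f.
Proof.
move=> hf; have := lin a hf (@HX0 R _ _ r); rewrite psi0 addr0 => <-.
by congr psi; apply: funext => x; rewrite addr0.
Qed.

Lemma psiM (f g : X -> C) : HX r f -> HX r g -> psi (fun x => f x * g x) = psi f * psi g.
Proof. exact: mul. Qed.

Lemma psi_spec (h : X -> C) : HX r h -> psi h != 0 ->
  forall d : C, 0 < d -> exists x, `|h x - psi h| < d.
Proof.
move=> hh nz d d0; apply: contrapT => hn.
have hd : forall x, d <= `|psi h - h x|.
  move=> x; rewrite distrC real_leNgt ?ger0_real ?(ltW d0) //.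
  by apply/negP => hx; apply: hn; exists x.
set mu := psi h in nz hd.
have cw := Cb_inv (HX_Cb hh) d0 hd.
have hk := HX_mulCb hh cw.
set k := (fun x => h x * (mu - h x)^-1) in hk.
have hkh := HX_mul hk hh.
have hnk := HX_scale (-1) hkh.
have E : (fun x => mu * k x + (-1) * (k x * h x)) = h.
  apply: funext => x; rewrite mulN1r mulrC -mulrBr /k -mulrA mulVf ?mulr1 //.
  by rewrite -normr_gt0; apply: lt_le_trans (hd x).
have := lin mu hk hnk; rewrite E psiZ // psiM // -/mu.
move=> /eqP; rewrite mulN1r mulrC addrN => /eqP mu0.
by move: nz; rewrite mu0 eqxx.
Qed.

Lemma small_eq0 (z : C) : (forall d : C, 0 < d -> `|z| < d) -> z = 0.
Proof.
move=> h; apply/eqP; apply: contraT => nz.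
by have := h `|z|; rewrite normr_gt0 nz ltxx => /(_ isT).
Qed.

Lemma psi_real (h : X -> C) : HX r h -> (forall x, (h x)^* = h x) ->
  (psi h)^* = psi h.
Proof.
move=> hh hr; have [->|nz] := eqVneq (psi h) 0; first by rewrite conjC0.
apply/eqP; rewrite -subr_eq0; apply/eqP/small_eq0 => d d0.
have d20 : 0 < d / 2 by rewrite divr_gt0.
have [x hx] := psi_spec hh nz d20.
have -> : (psi h)^* - psi h = (psi h - h x)^* + (h x - psi h).
  by rewrite rmorphB /= hr addrA subrK.
apply: le_lt_trans (ler_normD _ _) _.
by rewrite [d]splitr norm_conjC distrC; apply: ltrD.
Qed.

Let nzc := let: And4 _ _ a _ := hpsi in a.

Lemma psi_unit_real (a : X -> C) : HX r a -> (forall x, (a x)^* = a x) ->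
  psi a != 0 -> exists e, [/\ HX r e, (forall x, (e x)^* = e x) & psi e = 1].
Proof.
move=> ha ar nz; have cr := psi_real ha ar.
exists (fun x => (psi a)^-1 * a x); split.
- exact: HX_scale.
- by move=> x; rewrite rmorphM /= fmorphV /= cr ar.
- by rewrite psiZ // mulVf.
Qed.

Lemma psi_unit : exists e, [/\ HX r e, (forall x, (e x)^* = e x) & psi e = 1].
Proof.
have [f [hf nz]] := nzc.
have hre : HX r (fun x => 'Re (f x)).
  have := HX_scale (2^-1) (HX_add hf (HX_conj hf)).
  by congr (HX r _); apply: funext => x; rewrite ReE mulrC.
have him : HX r (fun x => 'Im (f x)).
  have := HX_scale ('i / 2) (HX_lin (-1) hf (HX_conj hf)).
  by congr (HX r _); apply: funext => x; rewrite ImE mulN1r addrC mulrAC.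
have rre : forall x, ('Re (f x))^* = 'Re (f x) by move=> x; apply: conj_Creal; exact: Creal_Re.
have rim : forall x, ('Im (f x))^* = 'Im (f x) by move=> x; apply: conj_Creal; exact: Creal_Im.
have := lin 'i him hre.
have -> : (fun x => 'i * 'Im (f x) + 'Re (f x)) = f.
  by apply: funext => x; rewrite addrC -Crect.
have [re0|rn0] := eqVneq (psi (fun x => 'Re (f x))) 0; last first.
  by move=> _; exact: psi_unit_real hre rre rn0.
have [im0|in0] := eqVneq (psi (fun x => 'Im (f x))) 0; last first.
  by move=> _; exact: psi_unit_real him rim in0.
by rewrite re0 im0 mulr0 addr0 => fe; move: nz; rewrite fe eqxx.
Qed.

Lemma psi_density (s : seq (X -> C)) : (forall h, List.In h s -> HX r h) ->
  forall eps : C, 0 < eps -> exists x, forall h, List.In h s -> `|h x - psi h| < eps.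
Proof.
move=> hs eps eps0.
have [e [he er e1]] := psi_unit.
pose g (h : X -> C) := fun x => (- psi h) * e x + h x.
have hg : forall h, HX r h -> HX r (g h) by move=> h hh; exact: HX_lin.
have pg : forall h, HX r h -> psi (g h) = 0.
  by move=> h hh; rewrite /g lin // e1 mulr1 addNr.
pose T h := fun x => g h x * (g h x)^*.
pose S := foldr (fun h acc => fun x => T h x + acc x) (fun _ => 0) s.
have [hS pS S0 Sb] : [/\ HX r S, psi S = 0, (forall x, 0 <= S x) &
    (forall h x, List.In h s -> `|g h x| ^+ 2 <= S x)].
  rewrite /S; elim: s hs {S} => [|h s IH] hs /=.
    by split => //; [exact: HX0 | exact: psi0].
  have [hS pS S0 Sb] := IH (fun h' hh' => hs h' (or_intror hh')).
  have hh : HX r h by apply: hs; left.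
  have hT : HX r (T h) by apply: HX_mul; [exact: (hg _ hh) | exact: (HX_conj (hg _ hh))].
  split.
  - exact: HX_add.
  - by rewrite psiD // pS addr0 /T psiM ?pg ?mul0r //; [exact: (hg _ hh) | exact: (HX_conj (hg _ hh))].
  - by move=> x; apply: addr_ge0 => //; exact: mul_conjC_ge0.
  - move=> h' x [<-|hin].
      by rewrite normCK lerDl.
    by apply: le_trans (Sb _ _ hin) _; rewrite lerDr; exact: mul_conjC_ge0.
have [P0 Pb] := foldr_nb psi s.
set P := foldr _ 0 s in P0 Pb.
pose q := fun x => (-2) * e x + e x * e x.
have hq : HX r q by apply: HX_lin => //; exact: HX_mul.
have pq : psi q = -1.
  by rewrite /q (lin (-2) he (HX_mul he he)) psiM // e1 !mulr1; ring.
pose a := fun x => S x + q x.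
have ha : HX r a by exact: HX_add.
have pa : psi a = -1 by rewrite /a psiD // pS pq add0r.
have na : psi a != 0 by rewrite pa oppr_eq0 oner_eq0.
pose eta := eps / (P + 1).
have eta0 : 0 < eta by exact: arith1p.
have [x hx] := psi_spec ha na (exprn_gt0 2 eta0).
exists x => h hin.
have Ea : a x - psi a = S x + `|e x - 1| ^+ 2.
  rewrite normCK rmorphB /= er rmorph1 pa /a /q; ring.
have H0 : 0 <= S x + `|e x - 1| ^+ 2 by rewrite addr_ge0 ?exprn_ge0.
have e1x : `|e x - 1| ^+ 2 <= `|a x - psi a|.
  by rewrite Ea (ger0_norm H0) lerDr.
have gx : `|g h x| ^+ 2 <= `|a x - psi a|.
  rewrite Ea (ger0_norm H0).
  by apply: le_trans (Sb _ _ hin) _; rewrite lerDl exprn_ge0.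
have lt1 : `|e x - 1| < eta.
  by rewrite -(ltr_pXn2r (_ : (0 < 2)%N)) ?nnegrE ?normr_ge0 ?(ltW eta0) //; exact: le_lt_trans e1x hx.
have lt2 : `|g h x| < eta.
  by rewrite -(ltr_pXn2r (_ : (0 < 2)%N)) ?nnegrE ?normr_ge0 ?(ltW eta0) //; exact: le_lt_trans gx hx.
have -> : h x - psi h = g h x + psi h * (e x - 1) by rewrite /g; ring.
apply: le_lt_trans (ler_normD _ _) _; rewrite normrM.
apply: lt_le_trans (ltr_leD lt2 (ler_wpM2l (normr_ge0 _) (ltW lt1))) _.
rewrite -{1}(mul1r eta) -mulrDl addrC mulrC.
have P1 : P + 1 != 0 by rewrite gt_eqF // ltr_wpDl.
rewrite -[X in _ <= X](divfK P1) -/eta ler_wpM2l ?(ltW eta0) //.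
by rewrite lerD2r; exact: Pb.
Qed.

End Part3.
Section Part4.

Lemma initial_cvgP (S : choiceType) (T : topologicalType) (f : S -> T)
  (F : set_system S) (s : S) : Filter F ->
  f @ F --> f s -> (F --> (s : initial_topology f)).
Proof.
move=> FF ff A [_ [[B Bop <-] Bfs sBfA]].
have fB : (f @ F) B by apply: ff; apply: open_nbhs_nbhs.
exact: filterS sBfA fB.
Qed.

Variable R : realType.
Local Notation C := (Cplx R).
Variables (X B : topologicalType) (r : X -> B).

Lemma betaB_coord_cont (t : X -> C) : continuous (fun phi : betaB R r => set_val phi t).
Proof.
move=> phi.
have h1 : (set_val : betaB R r -> {ptws (X -> C) -> C}) @ nbhs phi --> set_val phi.
  exact: initial_continuous.
have h3 := @proj_continuous (X -> C) (fun _ => C) t (set_val phi).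
exact: (continuous_comp h1 h3).
Qed.

Lemma betaB_cvg (F : set_system (betaB R r)) (psi : betaB R r) : Filter F ->
  (forall t, (fun phi : betaB R r => set_val phi t) @ F --> set_val psi t) -> F --> psi.
Proof.
move=> FF h.
apply: initial_cvgP.
apply/cvg_sup => t.
apply: initial_cvgP.
exact: h.
Qed.

End Part4.
Section Part5.
Variable R : realType.
Local Notation C := (Cplx R).
Local Open Scope complex_scope.

Lemma normC_real (x : R) : `|(x%:C : C)| = (`|x|)%:C.
Proof. by rewrite normc_def /= expr0n /= addr0 sqrtr_sqr. Qed.

Lemma realC_continuous : continuous (fun x : R => (x%:C : C)).
Proof.
move=> x; apply: (proj2 (@cvgrPdist_lt _ _ _ (nbhs x) _ _ _)) => e e0.
have [ei er] : complex.Im e = 0 /\ 0 < complex.Re e.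
  by move: e0; rewrite ltcE => /andP[/eqP h1 h2]; split.
have := proj1 (@cvgrPdist_lt _ _ _ (nbhs x) _ _ _) (@cvg_id _ (nbhs x)) (complex.Re e) er.
move=> /(_ (nbhs_filter x)) H; apply: filterS H => y hy.
rewrite -rmorphB normC_real.
have -> : e = (complex.Re e)%:C by apply/eqP; rewrite eq_complex /= ei !eqxx.
by rewrite ltcR.
Qed.

Lemma posC_real (e : C) : 0 < e -> e = (complex.Re e)%:C /\ 0 < complex.Re e.
Proof.
move=> e0; have [ei er] : complex.Im e = 0 /\ 0 < complex.Re e.
  by move: e0; rewrite ltcE => /andP[/eqP h1 h2]; split.
split => //; apply/eqP; rewrite eq_complex /= ei !eqxx //.
Qed.

Lemma lch_bump (B : topologicalType) : locally_compact [set: B] -> hausdorff_space B ->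
  forall K : set B, compact K ->
  exists v : B -> C, [/\ C0 v, (forall b, K b -> v b = 1) & (forall b, `|1 - v b| <= 1)].
Proof.
move=> lc hB K cK.
pose O := one_point_compactification B.
have hO : hausdorff_space O := one_point_compactification_hausdorff lc hB.
have cO : compact [set: O] := one_point_compactification_compact.
have nO : normal_space O := compact_normal hO cO.
have cA : closed [set (None : O)] by apply: accessible_closed_set1; exact: hausdorff_accessible.
have cK' : compact (Some @` K : set O).
  apply: continuous_compact => //; apply: continuous_subspaceT => x.
  exact: one_point_compactification_some_continuous.
have clK' := compact_closed hO cK'.
have dis : [set (None : O)] `&` (Some @` K) = set0.
  by rewrite -subset0 => y [-> [b _]].
have := (@normal_separatorP R O).1 nO _ _ cA clK' dis.
move=> /(@uniform_separatorP O R) [f [cf f01 fA fK]].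
have f0 : f None = 0 by apply: fA; exists None.
exists (fun b => (f (Some b))%:C); split.
- split.
    move=> b; apply: continuous_comp; last exact: realC_continuous.
    exact: (@continuous_comp B O R Some f b (@one_point_compactification_some_continuous B b) (cf _)).
  move=> e /posC_real [eE er].
  have := proj1 (@cvgrPdist_lt _ _ _ (nbhs (None : O)) _ _ _) (cf None) (complex.Re e) er.
  move=> /(_ (nbhs_filter (None : O))) H.
  case: H => W [cW clW] sub.
  exists W; split => // b nWb.
  have : `|f None - f (Some b)| < complex.Re e by apply: sub; left; exists b.
  by rewrite f0 sub0r normrN eE normC_real ltcR.
- move=> b Kb; have -> : f (Some b) = 1 by apply: fK; exists (Some b) => //; exists b.
  by [].
- move=> b; have := f01 (f (Some b)) (imageT f (Some b)).
  rewrite /= in_itv /= => /andP[fb0 fb1].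
  rewrite -[X in `|X - _|](rmorph1 (real_complex R)) -rmorphB normC_real lecR.
  by rewrite ger0_norm ?subr_ge0 //; lra.
Qed.

End Part5.
Section Part6.
Variable R : realType.
Local Notation C := (Cplx R).
Variables (X1 X2 B1 B2 : topologicalType).
Variables (f : X1 -> X2) (r1 : X1 -> B1) (r2 : X2 -> B2) (f0 : B1 -> B2).
Hypotheses (cf : continuous f) (cf0 : continuous f0) (comm : r2 \o f = f0 \o r1)
  (pf0 : proper_map f0).

Lemma comm_at x : r2 (f x) = f0 (r1 x).
Proof. exact: (congr1 (fun F => F x) comm). Qed.

Lemma C0_comp (v : B2 -> C) : C0 v -> C0 (fun b => v (f0 b)).
Proof.
move=> [cv hv]; split.
  by move=> b; apply: continuous_comp; [exact: cf0 | exact: cv].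
move=> e /hv [K [cK hK]]; exists (f0 @^-1` K); split; first exact: pf0.
by move=> b nb; apply: hK.
Qed.

Lemma HX_comp_f (k : X2 -> C) : HX r2 k -> HX r1 (fun x => k (f x)).
Proof.
move=> [ck ak]; split; first exact: Cb_comp.
move=> e /ak [g [[n [u [v [huv ->]]]] eg]].
exists (fun x => \sum_(i < n) u i (f x) * v i (r2 (f x))); split; last by move=> x; exact: eg.
exists n, (fun i x => u i (f x)), (fun i b => v i (f0 b)); split.
  move=> i; have [? ?] := huv i; split; [exact: Cb_comp | exact: C0_comp].
by apply: funext => x; apply: eq_bigr => i _; rewrite comm_at.
Qed.

Variable g : X2 -> X1.
Hypotheses (cg : continuous g) (fgK : forall y, f (g y) = y).
Hypotheses (lcB2 : locally_compact [set: B2]) (hB2 : hausdorff_space B2).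

Lemma HX_comp_g (h : X1 -> C) : HX r1 h -> HX r2 (fun y => h (g y)).
Proof.
move=> [ch ah]; split; first exact: Cb_comp.
move=> e e0.
have e20 : 0 < e / 2 by rewrite divr_gt0.
have [g0 [[n [u [w [huw g0E]]]] eg0]] := ah _ e20.
have [M hM] : {M : 'I_n -> C & forall k x, `|u k x| <= M k}.
  by apply: (@boolp.choice _ _ (fun k M => forall x, `|u k x| <= M)) => k; have [[_ ?] _] := huw k.
pose SM := \sum_(k < n) `|M k|.
have SM0 : 0 <= SM by apply: sumr_ge0 => k _; exact: normr_ge0.
pose eta := e / 2 / (SM + 1).
have eta0 : 0 < eta by exact: arith1p.
have [Kf hKf] : {Kf : 'I_n -> set B1 & forall k, compact (Kf k) /\
    forall b, ~ Kf k b -> `|w k b| < eta}.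
  apply: (@boolp.choice _ _ (fun k K => compact K /\ forall b, ~ K b -> `|w k b| < eta)) => k.
  by have [_ [_ /(_ _ eta0) [K hK]]] := huw k; exists K.
pose KN (j : nat) : set B1 := if insub j is Some k then Kf k else set0.
pose K := \big[setU/set0]_(j < n) KN j.
have cK : compact K.
  apply: bigsetU_compact => j _; rewrite /KN; case: insub => [k|]; last exact: compact0.
  by have [] := hKf k.
have KfK : forall k, Kf k `<=` K.
  move=> k; have -> : Kf k = KN k by rewrite /KN valK.
  exact: bigsetU_sup.
have cKK : compact (f0 @` K).
  apply: continuous_compact => //; apply: continuous_subspaceT => x; exact: cf0.
have [v [cv v1 v01]] := lch_bump R lcB2 hB2 cKK.
exists (fun y => h (g y) * v (r2 y)); split.
  exists 1%N, (fun _ y => h (g y)), (fun _ => v); split.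
    by move=> _; split => //; exact: Cb_comp.
  by apply: funext => y; rewrite big_ord1.
move=> y; rewrite -{1}(mulr1 (h (g y))) -mulrBr normrM.
have [Ky|nKy] := pselect (K (r1 (g y))).
  have -> : v (r2 y) = 1.
    by apply: v1; exists (r1 (g y)) => //; rewrite -{2}(fgK y) comm_at.
  by rewrite subrr normr0 mulr0 ltW.
apply: le_trans (ler_wpM2l (normr_ge0 _) (v01 _)) _; rewrite mulr1.
have hg0 : `|g0 (g y)| <= e / 2.
  rewrite g0E; apply: le_trans (ler_norm_sum _ _ _) _.
  apply: le_trans (arith1 e20 SM0); rewrite -/eta /SM mulr_sumr.
  apply: ler_sum => k _; rewrite normrM mulrC.
  apply: ler_pM => //.
    apply: ltW; apply: (proj2 (hKf k)) => Kk; apply: nKy; exact: (KfK k).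
  apply: le_trans (hM k (g y)) _; exact: real_ler_norm (ger0_real (le_trans (normr_ge0 _) (hM k (g y)))).
have -> : h (g y) = (h (g y) - g0 (g y)) + g0 (g y) by rewrite subrK.
apply: le_trans (ler_normD _ _) _; rewrite [e]splitr; apply: lerD => //.
Qed.

End Part6.
Definition pullF (R : realType) (X1 X2 B2 : topologicalType) (r2 : X2 -> B2)
  (f : X1 -> X2) (psi : (X1 -> Cplx R) -> Cplx R) : (X2 -> Cplx R) -> Cplx R :=
  fun k => if pselect (HX r2 k) is left _ then psi (fun x => k (f x)) else 0.

Section Part7.
Variable R : realType.
Local Notation C := (Cplx R).
Variables (X1 X2 B1 B2 : topologicalType) (r1 : X1 -> B1) (r2 : X2 -> B2).
Variables (f : X1 -> X2) (g : X2 -> X1).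
Hypotheses (Hf : forall k : X2 -> C, HX r2 k -> HX r1 (fun x => k (f x)))
  (Hg : forall h : X1 -> C, HX r1 h -> HX r2 (fun y => h (g y)))
  (gfK : forall x, g (f x) = x).

Lemma pullF_in (psi : (X1 -> C) -> C) (k : X2 -> C) : HX r2 k -> pullF r2 f psi k = psi (fun x => k (f x)).
Proof. by rewrite /pullF; case: pselect. Qed.

Lemma pullF_out (psi : (X1 -> C) -> C) (k : X2 -> C) : ~ HX r2 k -> pullF r2 f psi k = 0.
Proof. by rewrite /pullF; case: pselect. Qed.

Lemma pull_char (psi : (X1 -> C) -> C) : is_character r1 psi -> is_character r2 (pullF r2 f psi).
Proof.
case=> lin mul [h0 [hh0 nz]] out; split.
- move=> a k1 k2 hk1 hk2; rewrite !pullF_in //; last exact: HX_lin.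
  exact: lin (Hf hk1) (Hf hk2).
- move=> k1 k2 hk1 hk2; rewrite !pullF_in //; last exact: HX_mul.
  exact: mul (Hf hk1) (Hf hk2).
- exists (fun y => h0 (g y)); split; first exact: Hg.
  rewrite pullF_in; last exact: Hg.
  have -> : (fun x => h0 (g (f x))) = h0 by apply: funext => x; rewrite gfK.
  exact: nz.
- by move=> k hk; rewrite pullF_out.
Qed.

Definition Fm (psi : betaB R r1) : betaB R r2 :=
  exist _ (pullF r2 f (set_val psi) : {ptws (X2 -> C) -> C})
    (mem_set (pull_char (set_valP psi))).

Lemma Fm_val psi : set_val (Fm psi) = pullF r2 f (set_val psi).
Proof. by []. Qed.

Lemma Fm_cont : continuous Fm.
Proof.
move=> psi.
have FF : Filter (Fm @ nbhs psi) by apply: fmap_filter; exact: nbhs_filter.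
apply: betaB_cvg => t.
have [ht|ht] := pselect (HX r2 t).
  rewrite Fm_val pullF_in //.
  have H := (@betaB_coord_cont R _ _ r1 (fun x => t (f x)) psi).
  have HF : (fun phi => set_val phi t) @ (Fm @ nbhs psi) `=>`
            (fun phi => set_val phi (fun x => t (f x))) @ nbhs psi.
    move=> P hP; apply: (@filterS _ (nbhs psi) _ _ _ _ hP) => phi /=.
    by rewrite Fm_val pullF_in.
  exact: cvg_trans HF H.
rewrite Fm_val pullF_out //.
have H := (@cvg_cst C 0 _ (nbhs psi) _).
have HF : (fun phi => set_val phi t) @ (Fm @ nbhs psi) `=>` (fun _ => 0 : C) @ nbhs psi.
  move=> P hP; apply: (@filterS _ (nbhs psi) _ _ _ _ hP) => phi /=.
  by rewrite Fm_val pullF_out.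
exact: cvg_trans HF (H (nbhs_filter psi)).
Qed.

End Part7.
Lemma evalH_in (R : realType) (X B : topologicalType) (r : X -> B) x (h : X -> Cplx R) :
  HX r h -> evalH R r x h = h x.
Proof. by rewrite /evalH; case: pselect. Qed.

Lemma evalH_out (R : realType) (X B : topologicalType) (r : X -> B) x (h : X -> Cplx R) :
  ~ HX r h -> evalH R r x h = 0.
Proof. by rewrite /evalH; case: pselect. Qed.

Lemma char_out (R : realType) (X B : topologicalType) (r : X -> B) (psi : betaB R r) (h : X -> Cplx R) :
  ~ HX r h -> set_val psi h = 0.
Proof. by move=> hh; have [_ _ _ /(_ h hh)] := set_valP psi. Qed.

Theorem lemma4p15 (R : realType) (X1 X2 B1 B2 : topologicalType)
  (f : X1 -> X2) (r1 : X1 -> B1) (r2 : X2 -> B2) (f0 : B1 -> B2)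
  (cf : continuous f) (cr1 : continuous r1) (cr2 : continuous r2)
  (cf0 : continuous f0) (comm : r2 \o f = f0 \o r1)
  (lcB1 : locally_compact [set: B1]) (hB1 : hausdorff_space B1)
  (lcB2 : locally_compact [set: B2]) (hB2 : hausdorff_space B2)
  (pf0 : proper_map f0)
  (i1 : X1 -> betaB R r1) (hi1 : forall x, set_val (i1 x) = evalH R r1 x)
  (i2 : X2 -> betaB R r2) (hi2 : forall x, set_val (i2 x) = evalH R r2 x)
  (br1 : betaB R r1 -> B1) (cbr1 : continuous br1) (hbr1 : br1 \o i1 = r1)
  (br2 : betaB R r2 -> B2) (cbr2 : continuous br2) (hbr2 : br2 \o i2 = r2)
  (ft : betaB R r1 -> betaB R r2) (cft : continuous ft)
  (hft1 : ft \o i1 = i2 \o f) (hft2 : br2 \o ft = f0 \o br1) :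
  homeomorphism f -> homeomorphism ft.
Proof.
move=> [_ [g [gfK fgK cg]]].
have Hf : forall k : X2 -> Cplx R, HX r2 k -> HX r1 (fun x => k (f x)).
  by move=> k; exact: (HX_comp_f cf cf0 comm pf0).
have Hg : forall h : X1 -> Cplx R, HX r1 h -> HX r2 (fun y => h (g y)).
  by move=> h; exact: (HX_comp_g cf0 comm cg fgK lcB2 hB2).
pose F := Fm Hf Hg gfK.
pose G := Fm Hg Hf fgK.
have FG : forall phi, F (G phi) = phi.
  move=> phi; apply: val_inj; apply: funext => k /=.
  rewrite !Fm_val.
  have [hk|hk] := pselect (HX r2 k); last first.
    by rewrite pullF_out //; symmetry; exact: char_out.
  rewrite pullF_in // (pullF_in _ _ (Hf _ hk)).
  by have -> : (fun x => k (f (g x))) = k by apply: funext => y; rewrite fgK.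
have GF : forall psi, G (F psi) = psi.
  move=> psi; apply: val_inj; apply: funext => k /=.
  rewrite !Fm_val.
  have [hk|hk] := pselect (HX r1 k); last first.
    by rewrite pullF_out //; symmetry; exact: char_out.
  rewrite pullF_in // (pullF_in _ _ (Hg _ hk)).
  by have -> : (fun x => k (g (f x))) = k by apply: funext => y; rewrite gfK.
have Fi1 : forall x, ft (i1 x) = F (i1 x).
  move=> x; have -> : ft (i1 x) = i2 (f x) by exact: (congr1 (fun F => F x) hft1).
  apply: val_inj; change (set_val (i2 (f x)) = set_val (F (i1 x))).
  apply: funext => t; rewrite hi2 Fm_val hi1.
  have [ht|ht] := pselect (HX r2 t); last by rewrite pullF_out // evalH_out.
  by rewrite pullF_in // (evalH_in _ (Hf _ ht)) evalH_in.
have key : forall psi, ft psi = F psi.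
  move=> psi.
  pose D := [set i : seq (X1 -> Cplx R) * Cplx R |
              0 < i.2 /\ forall h, List.In h i.1 -> HX r1 h].
  pose Bs := fun i : seq (X1 -> Cplx R) * Cplx R =>
    [set x | forall h, List.In h i.1 -> `|h x - set_val psi h| < i.2].
  have GFi : Filter (filter_from D Bs).
    apply: filter_from_filter.
      by exists ([::], 1); split => //=; exact: ltr01.
    move=> [s1 e1] [s2 e2] [/= e10 hs1] [/= e20 hs2].
    have [e [e0 ee1 ee2]] : exists e : Cplx R, [/\ 0 < e, e <= e1 & e <= e2].
      case: (real_leP (gtr0_real e10) (gtr0_real e20)) => h.
        by exists e1; split.
      by exists e2; split => //; exact: ltW.
    exists (s1 ++ s2, e).
      split => //= h hin; case: (List.in_app_or _ _ _ hin) => ?; [exact: hs1 | exact: hs2].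
    move=> x /= hx; split => h hin.
      by apply: lt_le_trans (hx h _) ee1; apply: List.in_or_app; left.
    by apply: lt_le_trans (hx h _) ee2; apply: List.in_or_app; right.
  have GP : ProperFilter (filter_from D Bs).
    apply: filter_from_proper => -[s e] [/= e0 hs].
    have [x hx] := psi_density (set_valP psi) hs e0.
    by exists x.
  set GG := filter_from D Bs in GFi GP.
  have cvg1 : i1 @ GG --> psi.
    apply: betaB_cvg => t.
    have [ht|ht] := pselect (HX r1 t).
      apply/cvgrPdist_lt => e e0.
      exists ([:: t], e); first by split => //= h [<-|].
      by move=> x /= hx; rewrite hi1 evalH_in // distrC; apply: hx; left.
    rewrite (char_out psi ht).
    have H := (@cvg_cst (Cplx R) 0 _ GG _).
    have HF : (fun phi => set_val phi t) @ (i1 @ GG) `=>` (fun _ => 0 : Cplx R) @ GG.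
      move=> P hP; apply: (@filterS _ GG _ _ _ _ hP) => x /=.
      by rewrite hi1 evalH_out.
    exact: cvg_trans HF (H GFi).
  have A := cvg_comp _ _ cvg1 (cft psi).
  have B := cvg_comp _ _ cvg1 (@Fm_cont R _ _ _ _ r1 r2 f g Hf Hg gfK psi).
  have E : ft \o i1 = F \o i1 by apply: funext => x; exact: Fi1.
  rewrite E in A.
  apply: val_inj; change (set_val (ft psi) = set_val (F psi)).
  apply: funext => t.
  have CA := cvg_comp _ _ A (@betaB_coord_cont R _ _ r2 t (ft psi)).
  have CB := cvg_comp _ _ B (@betaB_coord_cont R _ _ r2 t (F psi)).
  exact: (cvg_unique (@norm_hausdorff _ (Cplx R)) CA CB).
split => //; exists G; split.
- by move=> psi; rewrite key GF.
- by move=> phi; rewrite key FG.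
- exact: Fm_cont.
Qed.
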